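(* Let $D$ be a positive integer and let $H$ be a loopless multigraph such that each edge of $H$ shares at least one endpoint with all but at most $D-2$ of the other edges of $H$, and let $H_0$ be its underlying simple graph. (i) If $H_0$ is the complete graph $K_h$ with $h\ge 6$, then $|E(H)|\le \frac52(D-2)$. (ii) If $H_0$ is $K_h$ minus one edge with $h\ge 7$, then $|E(H)|\le \frac{20}{9}(D-2)$. (iii) If $H_0$ is $K_6$ minus one edge, then $|E(H)|\le \frac{22}{9}(D-2)$.
   Context: The underlying simple graph $H_0$ of a multigraph $H$ has vertex set $V(H)$ and an edge $vw$ whenever $H$ has at least one edge between $v$ and $w$. $K_h$ denotes the complete graph on $h$ vertices. *)

(* Defs.v *)
(* A finite loopless multigraph is given by a finite vertex
   type V, a finite edge type E and endpoint maps src tgt : E -> V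
   (orientation irrelevant). *)
From mathcomp Require Import all_boot all_order all_algebra.
Set Implicit Arguments. Unset Strict Implicit. Unset Printing Implicit Defensive.

Definition loopless (V E : finType) (src tgt : E -> V) : Prop :=
  forall e, src e != tgt e.

Definition share_endpoint (V E : finType) (src tgt : E -> V) (e f : E) : bool :=
  [|| src e == src f, src e == tgt f, tgt e == src f | tgt e == tgt f].

Definition n_disjoint (V E : finType) (src tgt : E -> V) (e : E) : nat :=
  #|[set f | (f != e) && ~~ share_endpoint src tgt e f]|.

Definition adj0 (V E : finType) (src tgt : E -> V) (v w : V) : bool :=
  [exists e, ((src e == v) && (tgt e == w)) || ((src e == w) && (tgt e == v))].

Definition underlying_is_K (V E : finType) (src tgt : E -> V) (h : nat) : Prop :=
  #|V| = h /\ forall v w, adj0 src tgt v w = (v != w).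

Definition underlying_is_K_minus_edge (V E : finType) (src tgt : E -> V) (h : nat)
  : Prop :=
  #|V| = h /\ exists a b : V, a != b /\
    forall v w, adj0 src tgt v w =
      (v != w) && ~~ (((v == a) && (w == b)) || ((v == b) && (w == a))).

(* Main.v *)
Require Import Defs.
From mathcomp Require Import all_boot all_order all_algebra.
From mathcomp Require Import zify.
Import Order.TTheory GRing.Theory Num.Theory.

Module HH.

Lemma sum_nat_card (T : finType) (P : pred T) :
  \sum_(u : T) (P u : nat) = #|[set u | P u]|.
Proof.
rewrite -sum1_card [RHS]big_mkcond /=; apply: eq_bigr => u _.
by rewrite inE; case: (P u).
Qed.

Lemma sum_eq1 (T : finType) (a : T) (P : pred T) :
  \sum_(u : T) ((u == a) && P u : nat) = P a.
Proof.
rewrite (bigD1 a) //= eqxx big1 ?addn0 // => u /negbTE -> //.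
Qed.

Lemma sum_in (T : finType) (A : {set T}) :
  \sum_(u : T) ((u \in A) : nat) = #|A|.
Proof. by rewrite sum_nat_card; apply: eq_card => x; rewrite inE. Qed.

Lemma sum_prod (T : finType) (A B : {set T}) :
  \sum_(u : T) \sum_(v : T) ((u \in A) && (v \in B) : nat) = #|A| * #|B|.
Proof.
have -> : #|A| * #|B| = \sum_(u : T) ((u \in A) : nat) * #|B|.
  by rewrite -big_distrl /= sum_in.
apply: eq_bigr => u _; case: (u \in A) => /=; last by rewrite big1.
by rewrite mul1n sum_in.
Qed.

Lemma sum_split (T : finType) (F G : T -> T -> nat) :
  \sum_(u : T) \sum_(v : T) (F u v + G u v) =
  \sum_(u : T) \sum_(v : T) F u v + \sum_(u : T) \sum_(v : T) G u v.
Proof. by rewrite -big_split /=; apply: eq_bigr => u _; rewrite big_split. Qed.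

Section C.
Variables (T : finType).
Implicit Types (X : {set T}).

Lemma C1 X : \sum_(u : T) \sum_(v : T)
   ((u != v) && (u \notin X) && (v \notin X) : nat) + #|~: X| = #|~:X| * #|~:X|.
Proof.
rewrite -sum_prod.
have -> : #|~: X| = \sum_(u : T) \sum_(v : T)
   ((u == v) && (u \notin X) && (v \notin X) : nat).
  rewrite -sum_nat_card; apply: eq_bigr => u _.
  rewrite (eq_bigr (fun v => ((v == u) && ((u \notin X) && (v \notin X)) : nat))).
    by rewrite sum_eq1 andbb.
  by move=> v _; rewrite eq_sym andbA.
rewrite -sum_split; apply: eq_bigr => u _; apply: eq_bigr => v _.
by rewrite !inE; case: (u == v); case: (u \in X); case: (v \in X).
Qed.

Lemma C2 (a b : T) X : a != b ->
  \sum_(u : T) \sum_(v : T)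
   ((((u == a) && (v == b)) || ((u == b) && (v == a))) && (u \notin X) && (v \notin X) : nat)
  = 2 * ((a \notin X) && (b \notin X)).
Proof.
move=> ab.
rewrite (eq_bigr (fun u => ((u == a) && ((b \notin X) && (a \notin X)) : nat) +
                         ((u == b) && ((a \notin X) && (b \notin X)) : nat))).
  rewrite big_split /= !sum_eq1 andbC; case: (_ && _) => //.
move=> u _.
rewrite (eq_bigr (fun v => ((v == b) && ((u == a) && (u \notin X) && (v \notin X)) : nat) +
                         ((v == a) && ((u == b) && (u \notin X) && (v \notin X)) : nat))).
  rewrite big_split /= !sum_eq1.
  have ba : (b == a) = false by rewrite eq_sym (negbTE ab).
  case: (eqVneq u a) => [->|na].
    by rewrite (negbTE ab) /=; case: (a \in X); case: (b \in X).
  case: (eqVneq u b) => [->|nb].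
    by rewrite /=; case: (a \in X); case: (b \in X).
  by [].
move=> v _.
have ba : (b == a) = false by rewrite eq_sym (negbTE ab).
case: (eqVneq v b) => [->|nb].
  by rewrite ba /=; case: (u == a); case: (u == b); case: (u \in X); case: (b \in X).
case: (eqVneq v a) => [->|na].
  by rewrite /=; case: (u == a); case: (u == b); case: (u \in X); case: (a \in X).
by rewrite /= !andbF.
Qed.
End C.

Definition okab (T : finType) (a b u v : T) : bool :=
  (u != v) && ~~ (((u == a) && (v == b)) || ((u == b) && (v == a))).

Arguments okab {T}.

Section W.
Variable T : finType.
Implicit Types (X : {set T}) (a b : T).

Lemma T1_eq a b X : a != b ->
  \sum_(u : T) \sum_(v : T) (okab a b u v : nat) * ((u \notin X) && (v \notin X))
  + 2 * ((a \notin X) && (b \notin X)) + #|~: X| = #|~: X| * #|~: X|.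
Proof.
move=> ab; rewrite -(@C1 T X) -(@C2 T a b X ab) -sum_split; congr (_ + _).
apply: eq_bigr => u _; apply: eq_bigr => v _.
rewrite /okab.
have ba : (b == a) = false by rewrite eq_sym (negbTE ab).
case: (eqVneq u v) => [->|nuv] /=.
  case: (eqVneq v a) => [->|nva]; first by rewrite (negbTE ab).
  by rewrite !andbF.
case: (u == a); case: (v == b); case: (u == b); case: (v == a);
  by case: (u \in X); case: (v \in X).
Qed.

Lemma T2_eq a b X :
  \sum_(u : T) \sum_(v : T) ((u \in [set a; b]) && (v \notin [set a; b]) : nat)
      * ((u \notin X) && (v \notin X))
  = #|[set a; b] :\: X| * #|~: X :\: [set a; b]|.
Proof.
rewrite -sum_prod; apply: eq_bigr => u _; apply: eq_bigr => v _.
rewrite !inE.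
by case: (u \in X); case: (v \in X); case: (u == a); case: (u == b);
   case: (v == a); case: (v == b).
Qed.

Lemma T2'_eq a b X :
  \sum_(u : T) \sum_(v : T) ((v \in [set a; b]) && (u \notin [set a; b]) : nat)
      * ((u \notin X) && (v \notin X))
  = #|[set a; b] :\: X| * #|~: X :\: [set a; b]|.
Proof.
rewrite -T2_eq exchange_big /=; apply: eq_bigr => u _; apply: eq_bigr => v _.
by case: (u \in X); case: (v \in X); case: (u \in [set a; b]); case: (v \in [set a; b]).
Qed.

Lemma ka_split a b X :
  #|[set a; b] :\: X| + #|~: X :\: [set a; b]| = #|~: X|.
Proof. by rewrite -(cardsID [set a; b] (~: X)) setDE setIC. Qed.

Lemma ka_eq a b X : a != b ->
  #|[set a; b] :\: X| = (a \notin X) + (b \notin X).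
Proof.
move=> ab; rewrite -sum_in.
rewrite (eq_bigr (fun u => ((u == a) && (a \notin X) : nat) + ((u == b) && (b \notin X) : nat))).
  by rewrite big_split /= !sum_eq1.
move=> u _; rewrite !inE.
case: (eqVneq u a) => [->|nua]; first by rewrite (negbTE ab) /= andbT addn0.
by case: (eqVneq u b) => [->|]; rewrite /= ?andbT ?andbF.
Qed.
End W.

Lemma C1m (T : finType) (X : {set T}) : \sum_(u : T) \sum_(v : T)
   (u != v : nat) * ((u \notin X) && (v \notin X)) + #|~: X| = #|~:X| * #|~:X|.
Proof.
rewrite -(@C1 T X); congr (_ + _); apply: eq_bigr => u _; apply: eq_bigr => v _.
by rewrite mulnb andbA.
Qed.

Lemma scale c N E K p q : 0 < c -> c*E <= N*K -> q*N <= p*c -> q*E <= p*K.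
Proof. move=> *. nia. Qed.
Lemma t1 h : 6 <= h -> 2*(h*h-h) <= 5*((h-2)*(h-2)-(h-2)).
Proof. move=> *; nia. Qed.
Lemma t2 h : 7 <= h -> 9*(h*h-h-2) <= 20*((h-2)*(h-2)-(h-2)-2).
Proof. move=> *; nia. Qed.
Lemma t3 (n D : nat) : (n%:Z <= D%:Z - 2)%R -> n <= D - 2.
Proof. move=> *; lia. Qed.
Lemma t4 (n D : nat) : (n%:Z <= D%:Z - 2)%R -> 2 <= D.
Proof. move=> *; lia. Qed.

Lemma rat_fin (E K p q : nat) : 0 < q -> q * E <= p * K ->
  (E%:R <= p%:R / q%:R * K%:R :> rat)%R.
Proof.
move=> q0 H; rewrite mulrAC ler_pdivlMr ?ltr0n // -!natrM ler_nat.
by rewrite mulnC.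
Qed.

End HH.
Import HH.

Module GG.
Set Implicit Arguments. Unset Strict Implicit.

Section G.
Variables (V E : finType) (src tgt : E -> V).

Definition ends (f : E) : {set V} := [set src f; tgt f].
Definition dis (u v : V) : {set E} := [set f | (u \notin ends f) && (v \notin ends f)].

Lemma dis_bound (K : nat) (u v : V) :
  (forall e, n_disjoint src tgt e <= K) -> adj0 src tgt u v -> #|dis u v| <= K.
Proof.
move=> hK /existsP [e He]; apply: leq_trans (hK e).
apply: subset_leq_card; apply/subsetP => f; rewrite !inE => /andP [h1 h2].
have [hs1 hs2] : ((src e != src f) && (src e != tgt f)) /\ ((tgt e != src f) && (tgt e != tgt f)).
  by case/orP: He => /andP [/eqP -> /eqP ->]; rewrite -!negb_or.
apply/andP; split.
  by apply/eqP => fe; move: hs1; rewrite fe eqxx.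
rewrite /share_endpoint.
by case/andP: hs1 => /negbTE -> /negbTE ->; case/andP: hs2 => /negbTE -> /negbTE ->.
Qed.

Lemma count_main (w : V -> V -> nat) (K c : nat) :
  (forall u v, 0 < w u v -> #|dis u v| <= K) ->
  (forall f, c <= \sum_(u : V) \sum_(v : V) w u v * (f \in dis u v)) ->
  c * #|E| <= (\sum_(u : V) \sum_(v : V) w u v) * K.
Proof.
move=> hw hc.
apply: (@leq_trans (\sum_(f : E) \sum_(u : V) \sum_(v : V) w u v * (f \in dis u v))).
  rewrite mulnC -sum_nat_const; exact: leq_sum.
rewrite exchange_big big_distrl /=; apply: leq_sum => u _.
rewrite exchange_big big_distrl /=; apply: leq_sum => v _.
rewrite -big_distrr /= sum_in.
case: (posnP (w u v)) => [->|/hw h]; first by rewrite !mul0n.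
by rewrite leq_mul2l h orbT.
Qed.

Lemma dis_in f u v : (f \in dis u v) = (u \notin ends f) && (v \notin ends f).
Proof. by rewrite inE. Qed.

End G.

Lemma sum_set0 (V : finType) (w : V -> V -> nat) :
  \sum_(u : V) \sum_(v : V) w u v =
  \sum_(u : V) \sum_(v : V) w u v * ((u \notin (set0 : {set V})) && (v \notin (set0 : {set V}))).
Proof. by apply: eq_bigr => u _; apply: eq_bigr => v _; rewrite !in_set0 muln1. Qed.

Lemma inner_eq (V E : finType) (src tgt : E -> V) (w : V -> V -> nat) f :
  \sum_(u : V) \sum_(v : V) w u v * (f \in dis src tgt u v) =
  \sum_(u : V) \sum_(v : V) w u v * ((u \notin ends src tgt f) && (v \notin ends src tgt f)).
Proof. by apply: eq_bigr => u _; apply: eq_bigr => v _; rewrite dis_in. Qed.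

Lemma sum3 (T : finType) (F G K Y : T -> T -> nat) :
  \sum_(u : T) \sum_(v : T) (F u v + G u v + K u v) * Y u v =
  \sum_(u : T) \sum_(v : T) F u v * Y u v + \sum_(u : T) \sum_(v : T) G u v * Y u v
  + \sum_(u : T) \sum_(v : T) K u v * Y u v.
Proof.
rewrite -!sum_split; apply: eq_bigr => u _; apply: eq_bigr => v _.
by rewrite !mulnDl.
Qed.

End GG.
Import GG.


Theorem mainTheorem6 (D : nat) (V E : finType) (src tgt : E -> V) :
  (0 < D)%N ->
  loopless src tgt ->
  (forall e : E, ((n_disjoint src tgt e)%:Z <= D%:Z - 2)%R) ->
  ((forall h : nat, (6 <= h)%N -> underlying_is_K src tgt h ->
      (#|E|%:R <= (5%:R / 2%:R) * (D%:R - 2%:R) :> rat)%R)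
   /\ (forall h : nat, (7 <= h)%N -> underlying_is_K_minus_edge src tgt h ->
      (#|E|%:R <= (20%:R / 9%:R) * (D%:R - 2%:R) :> rat)%R)
   /\ (underlying_is_K_minus_edge src tgt 6 ->
      (#|E|%:R <= (22%:R / 9%:R) * (D%:R - 2%:R) :> rat)%R)).
Proof.
move=> D0 loopl hD.
have hK : forall e, n_disjoint src tgt e <= D - 2 by move=> e; apply: t3 (hD e).
have D2 : E -> 2 <= D by move=> e; apply: t4 (hD e).
have nX : forall f, #|~: ends src tgt f| = #|V| - 2.
  move=> f; have := cardsC (ends src tgt f); rewrite /ends cards2 (loopl f); lia.
have n0 : #|~: (set0 : {set V})| = #|V| by rewrite setC0 cardsT.
split; [|split].
- move=> h h6 [hV hadj].
  have : 1 < #|V| by lia.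
  case/card_gt1P => x [y [_ _ xy]].
  have : adj0 src tgt x y by rewrite hadj.
  case/existsP => e0 _; have D2' := D2 e0.
  rewrite hV in nX n0.
  have HN : \sum_(u : V) \sum_(v : V) (u != v : nat) = h*h - h.
    by rewrite sum_set0; have := @C1m _ (@set0 V); rewrite n0; lia.
  have H1 : ((h-2)*(h-2)-(h-2)) * #|E| <= (\sum_(u : V) \sum_(v : V) (u != v : nat)) * (D-2).
    apply: count_main.
      move=> u v; case: (eqVneq u v) => [->|nuv] //.
      by move=> _; apply: dis_bound => //; rewrite hadj nuv.
    by move=> f; rewrite inner_eq; have := @C1m _ (ends src tgt f); rewrite nX; lia.
  rewrite HN in H1.
  rewrite -natrB; last exact: D2'.
  apply: rat_fin => //; apply: (@scale ((h-2)*(h-2)-(h-2)) (h*h-h)); [nia | exact: H1 | exact: t1].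
- move=> h h7 [hV [a [b [ab hadj]]]].
  rewrite hV in nX n0.
  have : 0 < #|~: [set a; b]| by have := cardsC [set a; b]; rewrite cards2 ab hV; lia.
  case/card_gt0P => c; rewrite !inE negb_or => /andP [ca cb].
  have : adj0 src tgt a c.
    by rewrite hadj eq_sym ca eqxx (negbTE cb) (negbTE ca) /= andbF.
  case/existsP => e0 _; have D2' := D2 e0.
  have HN : \sum_(u : V) \sum_(v : V) (okab a b u v : nat) = h*h - h - 2.
    rewrite sum_set0; have := @T1_eq _ a b (@set0 V) ab; rewrite n0 !in_set0 /=; lia.
  have H1 : ((h-2)*(h-2)-(h-2)-2) * #|E| <=
            (\sum_(u : V) \sum_(v : V) (okab a b u v : nat)) * (D-2).
    apply: count_main.
      by move=> u v; rewrite lt0b => okuv; apply: dis_bound => //; rewrite hadj.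
    move=> f; rewrite inner_eq; have := @T1_eq _ a b (ends src tgt f) ab; rewrite nX.
    have := leq_b1 ((a \notin ends src tgt f) && (b \notin ends src tgt f)); lia.
  rewrite HN in H1.
  rewrite -natrB; last exact: D2'.
  apply: rat_fin => //; apply: (@scale ((h-2)*(h-2)-(h-2)-2) (h*h-h-2)); [nia | exact: H1 | exact: t2].
- move=> [hV [a [b [ab hadj]]]].
  rewrite hV in nX n0.
  have : 0 < #|~: [set a; b]| by have := cardsC [set a; b]; rewrite cards2 ab hV; lia.
  case/card_gt0P => c; rewrite !inE negb_or => /andP [ca cb].
  have : adj0 src tgt a c.
    by rewrite hadj eq_sym ca eqxx (negbTE cb) (negbTE ca) /= andbF.
  case/existsP => e0 _; have D2' := D2 e0.
  pose w := fun u v : V => (okab a b u v : nat)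
      + ((u \in [set a; b]) && (v \notin [set a; b]) : nat)
      + ((v \in [set a; b]) && (u \notin [set a; b]) : nat).
  have HN : \sum_(u : V) \sum_(v : V) w u v = 44.
    rewrite sum_set0 /w sum3 /= @T2_eq @T2'_eq.
    have e1 := @T1_eq _ a b (@set0 V) ab; have e4 := @ka_split _ a b (@set0 V).
    have e5 := @ka_eq _ a b (@set0 V) ab.
    rewrite n0 !in_set0 /= in e1 e4 e5; rewrite e5 in e4 *; lia.
  have H1 : 18 * #|E| <= (\sum_(u : V) \sum_(v : V) w u v) * (D-2).
    apply: count_main.
      move=> u v hw; apply: dis_bound => //; rewrite hadj; move: hw; rewrite /w /okab !inE.
      case: (eqVneq u v) => [->|nuv] /=.
        by case: (v == a); case: (v == b).
      by case: (u == a); case: (u == b); case: (v == a); case: (v == b).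
    move=> f; rewrite inner_eq /w sum3 /= @T2_eq @T2'_eq.
    have nb : ~~ ((a \in ends src tgt f) && (b \in ends src tgt f)).
      have hf : adj0 src tgt (src f) (tgt f) by apply/existsP; exists f; rewrite !eqxx.
      rewrite hadj in hf.
      apply/negP; rewrite /ends !in_set2 => /andP [/orP [/eqP ea|/eqP ea] /orP [/eqP eb|/eqP eb]];
        subst a b.
      - by rewrite eqxx in ab.
      - by rewrite !eqxx /= andbF in hf.
      - by rewrite !eqxx /= ?orbT ?andbF in hf.
      - by rewrite eqxx in ab.
    have e1 := @T1_eq _ a b (ends src tgt f) ab; have e4 := @ka_split _ a b (ends src tgt f).
    have e5 := @ka_eq _ a b (ends src tgt f) ab.
    rewrite nX in e1 e4; rewrite e5 in e4 *.
    move: nb e1 e4; case: (a \in ends src tgt f); case: (b \in ends src tgt f) => //= _; lia.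
  rewrite HN in H1.
  rewrite -natrB; last exact: D2'.
  apply: rat_fin => //; apply: (@scale 18 44) => //.
Qed.
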